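(* Let $T$ be an $n$-simplex, $m\ge0$ and $k\ge 2m+1$. Then the sets $D(\texttt v,m)$, $\texttt v\in\Delta_0(T)$, and the sets $\mathbb T^\ell_{k,1}(f)\setminus D(\Delta_0(f),m)$, $f\in\Delta_\ell(T)$, $\ell=1,\dots,n$, are pairwise disjoint and their union is $\mathbb T^n_k$. Consequently $$\mathbb P_k(T)=\mathbb P_k(D(\Delta_0(T),m))\oplus\bigoplus_{\ell=1}^n\bigoplus_{f\in\Delta_\ell(T)}\mathbb P_k\big(\mathbb T^\ell_{k,1}(f)\setminus D(\Delta_0(f),m)\big).$$
   Context: $T$ has vertices $\texttt v_0,\dots,\texttt v_n$ and barycentric coordinates $\lambda_0,\dots,\lambda_n$. $\mathbb N$ includes $0$; $\mathbb T^n_k=\{\alpha\in\mathbb N^{n+1}:\sum_i\alpha_i=k\}$; $\lambda^\alpha=\prod_i\lambda_i^{\alpha_i}$; for $S\subseteq\mathbb T^n_k$, $\mathbb P_k(S)=\mathrm{span}\{\lambda^\alpha:\alpha\in S\}$. $\Delta_\ell(T)$ is the set of $\ell$-dimensional faces; a face $f$ is identified with its vertex index set $f\subseteq\{0,\dots,n\}$, $f^*$ is its complement, and $\Delta_0(f)$ is its set of vertices. $D(f,r)=\{\alpha\in\mathbb T^n_k:\sum_{i\in f^*}\alpha_i\le r\}$; for a set of vertices, $D(\Delta_0(f),m)=\bigcup_{\texttt v\in\Delta_0(f)}D(\texttt v,m)$. $\mathbb T^\ell_{k,1}(f)=\{\alpha\in\mathbb T^n_k:\alpha_i\ge1\ \forall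 i\in f,\ \alpha_i=0\ \forall i\in f^*\}$ (lattice nodes in the interior of $f$). *)

(* Defs.v *)
From HB Require Import structures.
From mathcomp Require Import all_boot all_order all_algebra.
From mathcomp Require Import mpoly.

Set Implicit Arguments.
Unset Strict Implicit.
Unset Printing Implicit Defensive.

Import Order.TTheory GRing.Theory Num.Theory.
Local Open Scope ring_scope.

(* Multi-indices alpha in N^{n+1} with entries <= k (every alpha with
   |alpha| = k has entries <= k, so nothing is lost). Vertices of T are
   indexed by 'I_n.+1; a face f is identified with its vertex index set. *)
Definition mindex (n k : nat) := {ffun 'I_n.+1 -> 'I_k.+1}.

Definition latt (n k : nat) : {set mindex n k} :=
  [set a : mindex n k | (\sum_(i < n.+1) (a i : nat) == k)%N].

Definition Dset (n k : nat) (f : {set 'I_n.+1}) (r : nat) : {set mindex n k} :=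
  [set a in latt n k | (\sum_(i in ~: f) (a i : nat) <= r)%N].

Definition Dverts (n k : nat) (f : {set 'I_n.+1}) (m : nat) : {set mindex n k} :=
  \bigcup_(i in f) Dset k [set i] m.

Definition Tint (n k : nat) (f : {set 'I_n.+1}) : {set mindex n k} :=
  [set a in latt n k | [forall i, (i \in f) ==> (0 < (a i : nat))%N]
                       && [forall i, (i \notin f) ==> ((a i : nat) == 0%N)]].

Definition lampow (R : ringType) (n k : nat) (lam : 'I_n.+1 -> {mpoly R[n]})
  (a : mindex n k) : {mpoly R[n]} :=
  \prod_(i < n.+1) lam i ^+ (a i : nat).

Definition inPk (R : ringType) (n k : nat) (lam : 'I_n.+1 -> {mpoly R[n]})
  (S : {set mindex n k}) (p : {mpoly R[n]}) : Prop :=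
  exists c : mindex n k -> R, p = \sum_(a in S) c a *: lampow lam a.

(* Main.v *)
Require Import Defs.
From HB Require Import structures.
From mathcomp Require Import all_boot all_order all_algebra.
From mathcomp Require Import mpoly.
From mathcomp Require Import zify.
Import Order.TTheory GRing.Theory Num.Theory.
Set Implicit Arguments.
Unset Strict Implicit.
Unset Printing Implicit Defensive.

Lemma in_latt n k (a : mindex n k) : (a \in latt n k) = (\sum_i (a i : nat) == k)%N.
Proof. by rewrite inE. Qed.

Lemma sum_compl1 n (F : 'I_n.+1 -> nat) i :
  (\sum_(j in ~: [set i]) F j = \sum_j F j - F i)%N.
Proof.
rewrite [in RHS](bigD1 i) //= addKn; apply: eq_bigl => j.
by rewrite !inE.
Qed.

Lemma le_sum1 n (F : 'I_n.+1 -> nat) i : (F i <= \sum_j F j)%N.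
Proof. by rewrite (bigD1 i) //= leq_addr. Qed.

Lemma le_sum2 n (F : 'I_n.+1 -> nat) i j : i != j -> (F i + F j <= \sum_l F l)%N.
Proof.
move=> ij; rewrite (bigD1 i) //= leq_add2l (bigD1 j) //= ?leq_addr //.
by rewrite eq_sym.
Qed.

Lemma in_Dset1 n k m (a : mindex n k) i :
  (a \in Dset k [set i] m) = (a \in latt n k) && (k <= m + a i)%N.
Proof.
rewrite /Dset inE sum_compl1; case: (boolP (a \in latt n k)) => //=.
rewrite in_latt => /eqP ->. have := ltn_ord (a i). lia.
Qed.

Lemma Dset_sub n k (f : {set 'I_n.+1}) m : Dset k f m \subset latt n k.
Proof. by apply/subsetP => a; rewrite inE => /andP[]. Qed.

Lemma Tint_sub n k (f : {set 'I_n.+1}) : Tint k f \subset latt n k.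
Proof. by apply/subsetP => a; rewrite inE => /andP[]. Qed.

Lemma in_Tint n k (f : {set 'I_n.+1}) (a : mindex n k) :
  a \in Tint k f -> forall i, (i \in f) = (0 < (a i : nat))%N.
Proof.
rewrite inE => /andP[_ /andP[/forallP H1 /forallP H2]] i.
case: (boolP (i \in f)) => iF; first by rewrite (implyP (H1 i)).
by rewrite (eqP (implyP (H2 i) iF)).
Qed.

Section Part1.
Variables (n m k : nat).
Hypothesis hk : (2 * m + 1 <= k)%N.

Lemma p1a (i j : 'I_n.+1) : i != j ->
      Dset k [set i] m :&: Dset k [set j] m = set0.
Proof.
move=> ij; apply/setP => a; rewrite in_setI in_set0 !in_Dset1 in_latt.
apply/negP => /andP[/andP[/eqP S Hi] /andP[_ Hj]].
have := le_sum2 (fun l => (a l : nat)) ij; rewrite S /=. lia.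
Qed.

Lemma p1b (i : 'I_n.+1) (f : {set 'I_n.+1}) :
      Dset k [set i] m :&: (Tint k f :\: Dverts k f m) = set0.
Proof.
apply/setP => a; rewrite in_setI in_setD in_set0; apply/negP => /and3P[Di nD Ti].
case: (boolP (i \in f)) => iF.
  by move/negP: nD; apply; apply/bigcupP; exists i.
rewrite (in_Tint Ti) in iF; move: Di; rewrite in_Dset1.
move: iF; rewrite lt0n negbK => /eqP ->. move=>/andP[_]. lia.
Qed.

Lemma p1c (f g : {set 'I_n.+1}) : f != g ->
      (Tint k f :\: Dverts k f m) :&: (Tint k g :\: Dverts k g m) = set0.
Proof.
move=> fg; apply/setP => a; rewrite in_setI !in_setD in_set0; apply/negP => /andP[/andP[_ Tf] /andP[_ Tg]].
move/negP: fg; apply; apply/eqP/setP => i.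
by rewrite (in_Tint Tf) (in_Tint Tg).
Qed.

Lemma p1d : latt n k = (\bigcup_(i : 'I_n.+1) Dset k [set i] m)
                 :|: \bigcup_(f : {set 'I_n.+1} | (2 <= #|f|)%N)
                        (Tint k f :\: Dverts k f m).
Proof.
apply/setP => a; apply/idP/idP; last first.
  case/setUP => /bigcupP [x _]; first by move/(subsetP (Dset_sub _ _ _)).
  by rewrite inE => /andP[_ /(subsetP (Tint_sub _ _))].
move=> La.
case: (boolP [exists i, a \in Dset k [set i] m]).
  by case/existsP => i Hi; apply/setUP; left; apply/bigcupP; exists i.
move/existsPn => nD; apply/setUP; right.
pose f := [set i | (0 < (a i : nat))%N].
have Hf2 : (2 <= #|f|)%N.
  rewrite leqNgt; apply/negP => Hf.
  have [i Hi] : exists i, (0 < (a i : nat))%N.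
    case: (pickP (fun i => (0 < (a i : nat))%N)) => [i Hi|H]; first by exists i.
    have S0 : (\sum_i (a i : nat) = 0)%N.
      by apply: big1 => j _; move: (H j) => /= /negbT; rewrite lt0n negbK => /eqP.
    move: La; rewrite in_latt S0 => /eqP Ek. lia.
  have Hj : forall j, j != i -> (a j : nat) = 0%N.
    move=> j ji; apply/eqP; rewrite -leqn0 leqNgt; apply/negP => Hj.
    have : [set i; j] \subset f by apply/subsetP => l; rewrite !inE => /orP[]/eqP->.
    idtac.
    move/subset_leq_card; rewrite cards2 eq_sym ji. lia.
  move/negP: (nD i); apply; rewrite /Dset inE La /= big1 // => j.
  by rewrite !inE => /Hj ->.
apply/bigcupP; exists f => //; rewrite in_setD; apply/andP; split.
  apply/negP => /bigcupP [i _ Hi]; by move/negP: (nD i).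
rewrite /Tint in_set La /=; apply/andP; split; apply/forallP => i; rewrite /f inE //.
  by apply/implyP.
by apply/implyP; rewrite -eqn0Ngt.
Qed.
End Part1.

Local Open Scope ring_scope.

Section Span.
Variables (R : realFieldType) (n : nat) (lam : 'I_n.+1 -> {mpoly R[n]}).

Lemma inPk0 k (S : {set mindex n k}) : inPk lam S 0.
Proof. by exists (fun _ => 0); rewrite big1 // => a _; rewrite scale0r. Qed.

Lemma inPkD k (S : {set mindex n k}) p q :
  inPk lam S p -> inPk lam S q -> inPk lam S (p + q).
Proof.
case=> c1 -> [c2 ->]; exists (fun a => c1 a + c2 a).
by rewrite -big_split /=; apply: eq_bigr => a _; rewrite scalerDl.
Qed.

Lemma inPkZ k (S : {set mindex n k}) x p : inPk lam S p -> inPk lam S (x *: p).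
Proof.
case=> c ->; exists (fun a => x * c a).
by rewrite scaler_sumr; apply: eq_bigr => a _; rewrite scalerA.
Qed.

Lemma inPk_sum k (S : {set mindex n k}) (I : Type) (r : seq I) (P : pred I) F :
  (forall i, P i -> inPk lam S (F i)) -> inPk lam S (\sum_(i <- r | P i) F i).
Proof.
move=> H; elim/big_rec: _ => [|i x Pi Hx]; first exact: inPk0.
by apply: inPkD => //; apply: H.
Qed.

Lemma inPk_basis k (S : {set mindex n k}) a : a \in S -> inPk lam S (lampow lam a).
Proof.
move=> aS; exists (fun b => (b == a)%:R).
rewrite (bigD1 a) //= eqxx scale1r big1 ?addr0 // => b /andP[_ /negbTE ->].
by rewrite scale0r.
Qed.

Lemma inPk_sub k (S S' : {set mindex n k}) p :
  S \subset S' -> inPk lam S p -> inPk lam S' p.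
Proof.
move=> sS [c ->]; exists (fun b => if b \in S then c b else 0).
rewrite [RHS]big_mkcond [LHS]big_mkcond; apply: eq_bigr => b _.
case: (boolP (b \in S)) => bS; first by rewrite (subsetP sS).
by case: (b \in S'); rewrite ?scale0r.
Qed.

Definition shift d (a : mindex n d) (i : 'I_n.+1) : mindex n d.+1 :=
  [ffun j => inord ((a j : nat) + (j == i))].

Lemma shiftE d (a : mindex n d) i j : (shift a i j : nat) = ((a j : nat) + (j == i))%N.
Proof.
rewrite /shift ffunE inordK //; have := ltn_ord (a j); case: (j == i) => /=; lia.
Qed.

Lemma shift_latt d (a : mindex n d) i : a \in latt n d -> shift a i \in latt n d.+1.
Proof.
rewrite !inE => /eqP Sa; under eq_bigr do rewrite shiftE.
rewrite big_split /= Sa (bigD1 i) //= eqxx big1 ?addn0 ?addn1 // => j /negbTE ->.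
by [].
Qed.

Lemma lampow_shift d (a : mindex n d) i :
  lampow lam (shift a i) = lampow lam a * lam i.
Proof.
rewrite /lampow; under eq_bigr do rewrite shiftE exprD.
rewrite big_split /=; congr (_ * _).
rewrite (bigD1 i) //= eqxx expr1 big1 ?mulr1 // => j /negbTE ->.
by rewrite expr0.
Qed.

Lemma H_mul_lam d p i : inPk lam (latt n d) p -> inPk lam (latt n d.+1) (p * lam i).
Proof.
case=> c ->; rewrite mulr_suml; apply: inPk_sum => a aL.
rewrite -scalerAl -lampow_shift; apply: inPkZ; apply: inPk_basis.
exact: shift_latt.
Qed.

Lemma H_mul_lin d p (w : 'I_n.+1 -> R) : inPk lam (latt n d) p ->
  inPk lam (latt n d.+1) (p * \sum_i w i *: lam i).
Proof.
move=> Hp; rewrite mulr_sumr; apply: inPk_sum => i _.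
by rewrite -scalerAr; apply: inPkZ; apply: H_mul_lam.
Qed.

Lemma H0_1 : inPk lam (latt n 0) 1.
Proof.
have -> : (1 : {mpoly R[n]}) = lampow lam ([ffun => ord0] : mindex n 0).
  by rewrite /lampow big1 // => i _; rewrite ffunE expr0.
apply: inPk_basis; rewrite inE big1 // => i _; by rewrite ffunE.
Qed.

End Span.


Section Affine.
Variables (R : realFieldType) (n : nat).

Lemma mcoeff_sumE (I : Type) (r : seq I) (P : pred I) (F : I -> {mpoly R[n]}) mo :
  (\sum_(i <- r | P i) F i)@_mo = \sum_(i <- r | P i) (F i)@_mo.
Proof. exact: raddf_sum. Qed.

Lemma meval_sumE (x : 'I_n -> R) (I : Type) (r : seq I) (P : pred I) (F : I -> {mpoly R[n]}) :
  (\sum_(i <- r | P i) F i).@[x] = \sum_(i <- r | P i) (F i).@[x].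
Proof. exact: raddf_sum. Qed.

Lemma affine_decomp (p : {mpoly R[n]}) : (msize p <= 2)%N ->
  p = p@_0 *: 1 + \sum_j p@_U_(j) *: 'X_j.
Proof.
move=> hp; apply/mpolyP => mo.
rewrite mcoeffD mcoeffZ mcoeff1 mcoeff_sumE.
under eq_bigr do rewrite mcoeffZ mcoeffX.
have [->|nz] := eqVneq mo 0%MM.
  rewrite mulr1 big1 ?addr0 // => j _; by rewrite mnm1_eq0 mulr0.
rewrite mulr0 add0r.
case: (boolP (mdeg mo == 1%N)) => [/mdeg1P [i /eqP ->]|d1].
  rewrite (bigD1 i) //= eqxx mulr1 big1 ?addr0 // => j ji.
  have -> : (U_(j) == U_(i))%MM = false.
    apply/negP => /eqP /mnmP /(_ j); rewrite !mnm1E eqxx eq_sym (negbTE ji).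
    by [].
  by rewrite mulr0.
have : (msize p <= mdeg mo)%N.
  apply: (leq_trans hp); move: nz d1; rewrite -mdeg_eq0; lia.
move/msize_mdeg_ge; rewrite -mcoeff_eq0 => /eqP ->.
rewrite big1 // => j _; case: eqP => [E|]; last by rewrite mulr0.
by move: d1; rewrite -E mdeg1.
Qed.

Lemma affine_eval (p : {mpoly R[n]}) x : (msize p <= 2)%N ->
  p.@[x] = p@_0 + \sum_j p@_U_(j) * x j.
Proof.
move=> hp; rewrite {1}(affine_decomp hp) mevalD mevalZ meval1 mulr1 meval_sumE.
by congr (_ + _); apply: eq_bigr => j _; rewrite mevalZ mevalXU.
Qed.

End Affine.

Section Bary.
Variables (R : realFieldType) (n : nat).
Variables (v : 'I_n.+1 -> 'I_n -> R) (lam : 'I_n.+1 -> {mpoly R[n]}).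
Hypothesis Hs : forall i, (msize (lam i) <= 2)%N.
Hypothesis Hev : forall i j, (lam i).@[v j] = (i == j)%:R.

Let M : 'M[R]_n.+1 :=
  \matrix_(i, s) (if unlift ord0 s is Some j then (lam i)@_U_(j) else (lam i)@_0).
Let V : 'M[R]_n.+1 := \matrix_(s, l) (if unlift ord0 s is Some j then v l j else 1).

Lemma VM1 : (V *m M = 1%:M)%R.
Proof.
apply: mulmx1C; apply/matrixP => i l; rewrite !mxE big_ord_recl !mxE unlift_none mulr1.
under eq_bigr do rewrite !mxE liftK.
by rewrite -affine_eval // Hev.
Qed.

Lemma E0 s : \sum_i M i s = (s == ord0)%:R.
Proof.
move/matrixP: VM1 => /(_ ord0 s); rewrite !mxE eq_sym => <-.
by apply: eq_bigr => i _; rewrite !mxE unlift_none mul1r.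
Qed.

Lemma Er r s : \sum_i v i r * M i s = (lift ord0 r == s)%:R.
Proof.
move/matrixP: VM1 => /(_ (lift ord0 r) s); rewrite !mxE => <-.
by apply: eq_bigr => i _; rewrite !mxE liftK.
Qed.

Lemma bary_sum : \sum_i lam i = 1.
Proof.
rewrite (eq_bigr _ (fun i _ => affine_decomp (Hs i))) big_split /= -scaler_suml.
have -> : \sum_i (lam i)@_0 = 1.
  transitivity (\sum_i M i ord0); last by rewrite E0 eqxx.
  by apply: eq_bigr => i _; rewrite mxE unlift_none.
rewrite scale1r exchange_big /= big1 ?addr0 // => j _.
rewrite -scaler_suml.
have -> : \sum_i (lam i)@_U_(j) = 0.
  transitivity (\sum_i M i (lift ord0 j)); last by rewrite E0 eq_sym (negbTE (neq_lift _ _)).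
  by apply: eq_bigr => i _; rewrite mxE liftK.
by rewrite scale0r.
Qed.

Lemma bary_X r : 'X_r = \sum_i v i r *: lam i.
Proof.
rewrite (eq_bigr _ (fun i _ => congr1 (fun q => v i r *: q) (affine_decomp (Hs i)))).
under eq_bigr do rewrite scalerDr scaler_sumr.
rewrite big_split /=; under eq_bigr do rewrite scalerA; rewrite -scaler_suml.
have -> : \sum_i v i r * (lam i)@_0 = 0.
  transitivity (\sum_i v i r * M i ord0); last by rewrite Er eq_sym (negbTE (neq_lift _ _)).
  by apply: eq_bigr => i _; rewrite mxE unlift_none.
rewrite scale0r add0r; under eq_bigr do under eq_bigr do rewrite scalerA.
rewrite exchange_big /= (bigD1 r) //=.
rewrite [X in _ + X]big1 => [|j jr]; last first.
  rewrite -scaler_suml.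
  have -> : \sum_i v i r * (lam i)@_U_(j) = 0.
    transitivity (\sum_i v i r * M i (lift ord0 j)); last by rewrite Er (inj_eq (@lift_inj _ _)) eq_sym (negbTE jr).
    by apply: eq_bigr => i _; rewrite mxE liftK.
  by rewrite scale0r.
rewrite addr0 -scaler_suml.
have -> : \sum_i v i r * (lam i)@_U_(r) = 1.
  transitivity (\sum_i v i r * M i (lift ord0 r)); last by rewrite Er eqxx.
  by apply: eq_bigr => i _; rewrite mxE liftK.
by rewrite scale1r.
Qed.

End Bary.


Section Deg.
Variables (R : realFieldType) (n : nat).

Lemma msizeM_le2 (p q : {mpoly R[n]}) a b :
  (msize p <= a.+1)%N -> (msize q <= b.+1)%N -> (msize (p * q) <= (a + b).+1)%N.
Proof.
have [->|nzp] := eqVneq p 0; first by rewrite mul0r msize0.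
have [->|nzq] := eqVneq q 0; first by rewrite mulr0 msize0.
move=> ha hb; rewrite msizeM // -subn1.
apply: leq_trans (leq_sub2r 1 (leq_add ha hb)) _; lia.
Qed.

Lemma msizeX_le (p : {mpoly R[n]}) e : (msize p <= 2)%N -> (msize (p ^+ e) <= e.+1)%N.
Proof.
move=> hp; elim: e => [|e IH]; first by rewrite expr0 msize1.
by rewrite exprS; apply: (@msizeM_le2 _ _ 1 e).
Qed.

Lemma msize_lampow (lam : 'I_n.+1 -> {mpoly R[n]}) k (a : mindex n k) :
  (forall i, msize (lam i) <= 2)%N -> a \in latt n k -> (msize (lampow lam a) <= k.+1)%N.
Proof.
move=> Hs; rewrite inE => /eqP Sk.
suff : (msize (lampow lam a) <= (\sum_i (a i : nat)).+1)%N by rewrite Sk.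
rewrite /lampow.
elim/big_rec2: _ => [|i x p _ Hp]; first by rewrite msize1.
by apply: msizeM_le2 => //; apply: msizeX_le.
Qed.

Lemma msize_sum_le (I : Type) (r : seq I) (P : pred I) (F : I -> {mpoly R[n]}) d :
  (forall i, P i -> msize (F i) <= d)%N -> (msize (\sum_(i <- r | P i) F i) <= d)%N.
Proof.
move=> H; elim/big_rec: _ => [|i x Pi Hx]; first by rewrite msize0.
apply: leq_trans (msizeD_le _ _) _; rewrite geq_max Hx andbT; exact: H.
Qed.

Lemma inPk_msize (lam : 'I_n.+1 -> {mpoly R[n]}) k (S : {set mindex n k}) p :
  (forall i, msize (lam i) <= 2)%N -> S \subset latt n k -> inPk lam S p -> (msize p <= k.+1)%N.
Proof.
move=> Hs sS [c ->]; apply: msize_sum_le => a aS.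
apply: leq_trans (msizeZ_le _ _) _; apply: msize_lampow => //.
exact: (subsetP sS).
Qed.
End Deg.

Section SpanAll.
Variables (R : realFieldType) (n : nat).
Variables (v : 'I_n.+1 -> 'I_n -> R) (lam : 'I_n.+1 -> {mpoly R[n]}).
Hypothesis Hs : forall i, (msize (lam i) <= 2)%N.
Hypothesis Hev : forall i j, (lam i).@[v j] = (i == j)%:R.

Lemma H_up d p : inPk lam (latt n d) p -> inPk lam (latt n d.+1) p.
Proof.
move=> Hp; have := H_mul_lin (fun _ => 1) Hp.
by under eq_bigr do rewrite scale1r; rewrite (bary_sum Hs Hev) mulr1.
Qed.

Lemma H_X d p r : inPk lam (latt n d) p -> inPk lam (latt n d.+1) (p * 'X_r).
Proof. by move=> Hp; rewrite (bary_X Hs Hev r); apply: H_mul_lin. Qed.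

Lemma H_mono j (mo : 'X_{1..n}) : mdeg mo = j -> inPk lam (latt n j) 'X_[mo].
Proof.
elim: j mo => [|j IH] mo.
  by move/eqP; rewrite mdeg_eq0 => /eqP ->; rewrite mpolyX0; apply: H0_1.
move=> dmo.
have [i Hi] : exists i, (0 < mo i)%N.
  case: (pickP (fun i => (0 < mo i)%N)) => [i Hi|H]; first by exists i.
  move: dmo; rewrite mdegE big1 // => l _; move: (H l) => /= /negbT.
  by rewrite lt0n negbK => /eqP.
have E : mo = (mo - U_(i) + U_(i))%MM.
  apply/mnmP => l; rewrite mnmDE mnmBE mnm1E.
  by case: eqP => [<-|_]; [lia | rewrite subn0 addn0].
rewrite E mpolyXD; apply: H_X; apply: IH.
by move: dmo; rewrite {1}E mdegD mdeg1 addn1 => -[].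
Qed.

Lemma H_le j k p : (j <= k)%N -> inPk lam (latt n j) p -> inPk lam (latt n k) p.
Proof.
move/subnK <-; elim: (k - j)%N => [|e IH] Hp //.
by rewrite addSn; apply: H_up; apply: IH.
Qed.

Lemma span_all k p : (msize p <= k.+1)%N -> inPk lam (latt n k) p.
Proof.
move=> hp; rewrite (mpolyE p); apply: inPk_sum => mo _.
case: (boolP (mo \in msupp p)) => ms; last first.
  by move: ms; rewrite mcoeff_msupp negbK => /eqP ->; rewrite scale0r; apply: inPk0.
apply: inPkZ; apply: (@H_le (mdeg mo)); last exact: H_mono.
by have := msize_mdeg_lt ms; lia.
Qed.

End SpanAll.


Section Indep.
Variables (R : realFieldType) (n : nat).
Variables (v : 'I_n.+1 -> 'I_n -> R) (lam : 'I_n.+1 -> {mpoly R[n]}).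
Hypothesis Hs : forall i, (msize (lam i) <= 2)%N.
Hypothesis Hev : forall i j, (lam i).@[v j] = (i == j)%:R.
Variable k : nat.

Definition momap (a : mindex n k) : 'X_{1..n} := [multinom (a (lift ord0 j) : nat) | j < n].

Lemma momap_deg a : a \in latt n k -> (mdeg (momap a) < k.+1)%N.
Proof.
rewrite inE => /eqP Sk; rewrite mdegE ltnS.
under eq_bigr do rewrite mnmE.
move: Sk; rewrite big_ord_recl => Sk; apply: leq_trans (leq_addl (a ord0 : nat) _) _; by rewrite Sk.
Qed.

Definition fmap (a : mindex n k) : 'X_{1..n < k.+1} := insubd bm0 (momap a).

Lemma card_latt : (#|latt n k| <= #|{: 'X_{1..n < k.+1}}|)%N.
Proof.
rewrite -(@card_in_imset _ _ fmap); first exact: max_card.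
move=> a b aL bL; have ha := momap_deg aL; have hb := momap_deg bL.
move=> /(congr1 val); rewrite /fmap !insubdK // => E.
have Ej (j : 'I_n) : (a (lift ord0 j) : nat) = b (lift ord0 j).
  by move/mnmP: E => /(_ j); rewrite !mnmE.
apply/ffunP => i; apply: ord_inj.
case: (unliftP ord0 i) => [j ->|->]; first exact: Ej.
move: aL bL; rewrite !inE !big_ord_recl => /eqP Sa /eqP Sb.
have : (\sum_(j < n) (a (lift ord0 j) : nat) = \sum_(j < n) (b (lift ord0 j) : nat))%N.
  by apply: eq_bigr => j _; exact: Ej.
by move=> H; apply: (@addIn (\sum_(j < n) (b (lift ord0 j) : nat))) => /=; rewrite -{1}H Sa Sb.
Qed.

Let L := latt n k.
Let Mo := 'X_{1..n < k.+1}.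

Let A : 'M[R]_(#|L|, #|{: Mo}|) :=
  \matrix_(r, s) (lampow lam (enum_val r))@_(enum_val s : Mo).

Lemma rowA (c : mindex n k -> R) :
  ((\row_r c (enum_val r)) *m A = \row_t (\sum_(a in L) c a *: lampow lam a)@_(enum_val t : Mo))%R.
Proof.
apply/rowP => t; rewrite !mxE mcoeff_sumE [in RHS]big_enum_val.
by apply: eq_bigr => r _; rewrite !mxE mcoeffZ.
Qed.

Lemma A_full : row_full A.
Proof.
rewrite -sub1mx; apply/row_subP => s; rewrite row1.
have hX : (msize ('X_[(enum_val s : Mo) : 'X_{1..n}] : {mpoly R[n]}) <= k.+1)%N.
  by rewrite msizeX ltnS -ltnS bmdeg.
have [c E] := span_all Hs Hev hX.
apply/submxP; exists (\row_r c (enum_val r)); rewrite rowA -E.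
apply/rowP => t; rewrite !mxE mcoeffX eqxx /=.
by rewrite -bmeqP (inj_eq enum_val_inj) eq_sym.
Qed.

Lemma A_free : row_free A.
Proof.
rewrite -row_leq_rank.
have := col_leq_rank A; rewrite A_full => h.
exact: leq_trans card_latt h.
Qed.

Lemma indep (c : mindex n k -> R) :
  \sum_(a in latt n k) c a *: lampow lam a = 0 -> forall a, a \in latt n k -> c a = 0.
Proof.
move=> Hc a aL.
have : ((\row_r c (enum_val r)) *m A = 0)%R.
  by rewrite rowA Hc; apply/rowP => t; rewrite !mxE mcoeff0.
move/eqP; rewrite mulmx_free_eq0 ?A_free // => /eqP /rowP /(_ (enum_rank_in aL a)).
by rewrite !mxE enum_rankK_in.
Qed.
End Indep.


Section Split.
Variables (n m k : nat).
Hypothesis hk : (2 * m + 1 <= k)%N.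

Definition piece (f : {set 'I_n.+1}) : {set mindex n k} := Tint k f :\: Dverts k f m.

Lemma Dverts_T : Dverts k [set: 'I_n.+1] m = \bigcup_(i : 'I_n.+1) Dset k [set i] m.
Proof. by rewrite /Dverts; apply: eq_bigl => i; rewrite inE. Qed.

Lemma Dverts_sub : Dverts k [set: 'I_n.+1] m \subset latt n k.
Proof.
by apply/subsetP => a; rewrite Dverts_T => /bigcupP[i _]; apply: (subsetP (Dset_sub _ _ _)).
Qed.

Lemma piece_sub f : piece f \subset latt n k.
Proof.
by apply/subsetP => a; rewrite in_setD => /andP[_]; apply: (subsetP (Tint_sub _ _)).
Qed.

Lemma piece_notD f a : a \in piece f -> a \notin Dverts k [set: 'I_n.+1] m.
Proof.
move=> Ha; rewrite Dverts_T; apply/negP => /bigcupP[i _ Hi].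
by move/setP: (p1b hk i f) => /(_ a); rewrite in_setI Hi Ha in_set0.
Qed.

Lemma piece_supp f a : a \in piece f -> [set i | (0 < (a i : nat))%N] = f.
Proof.
rewrite in_setD => /andP[_ Ta]; apply/setP => i; by rewrite inE (in_Tint Ta).
Qed.

Lemma split_sum (V : nmodType) (G : mindex n k -> V) :
  \sum_(a in latt n k) G a = \sum_(a in Dverts k [set: 'I_n.+1] m) G a
     + \sum_(f : {set 'I_n.+1} | (2 <= #|f|)%N) \sum_(a in piece f) G a.
Proof.
rewrite (@p1d n m k hk) -Dverts_T.
set D := Dverts _ _ _; set U := \bigcup_(f | _) _.
rewrite (@eq_bigl _ _ _ _ _ _ [predU D & U]); last by move=> a; rewrite !inE.
rewrite bigU; last first.
  rewrite -setI_eq0; apply/eqP/setP => a; rewrite in_setI in_set0.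
  apply/negP => /andP[Da /bigcupP[f Pf Hf]].
  by move/negP: (piece_notD Hf).
congr (_ + _).
pose F' (f : {set 'I_n.+1}) := if (2 <= #|f|)%N then piece f else set0.
have -> : U = \bigcup_f F' f by rewrite /U big_mkcond.
rewrite partition_disjoint_bigcup; last first.
  move=> f g fg; rewrite /F'.
  case: ifP => Pf; last by rewrite -setI_eq0 set0I.
  case: ifP => Pg; last by rewrite -setI_eq0 setI0.
  by rewrite -setI_eq0; apply/eqP; apply: p1c.
rewrite [RHS]big_mkcond; apply: eq_bigr => f _; rewrite /F'.
by case: ifP => // _; rewrite big_set0.
Qed.
End Split.


Unset Implicit Arguments.

Theorem mainTheorem12 (R : realFieldType) (n m k : nat)
  (v : 'I_n.+1 -> 'I_n -> R) (lam : 'I_n.+1 -> {mpoly R[n]}) :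
  (2 * m + 1 <= k)%N ->
  (forall i, (msize (lam i) <= 2)%N) ->
  (forall i j, (lam i).@[v j] = (i == j)%:R) ->
  ((forall i j : 'I_n.+1, i != j ->
      Dset k [set i] m :&: Dset k [set j] m = set0)
   /\ (forall (i : 'I_n.+1) (f : {set 'I_n.+1}), (2 <= #|f|)%N ->
      Dset k [set i] m :&: (Tint k f :\: Dverts k f m) = set0)
   /\ (forall f g : {set 'I_n.+1}, (2 <= #|f|)%N -> (2 <= #|g|)%N -> f != g ->
      (Tint k f :\: Dverts k f m) :&: (Tint k g :\: Dverts k g m) = set0)
   /\ latt n k = (\bigcup_(i : 'I_n.+1) Dset k [set i] m)
                 :|: \bigcup_(f : {set 'I_n.+1} | (2 <= #|f|)%N)
                        (Tint k f :\: Dverts k f m))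
  /\
  ((forall p : {mpoly R[n]},
      (msize p <= k.+1)%N <->
      exists (q0 : {mpoly R[n]}) (q : {set 'I_n.+1} -> {mpoly R[n]}),
        [/\ inPk lam (Dverts k setT m) q0,
            (forall f : {set 'I_n.+1}, (2 <= #|f|)%N -> inPk lam (Tint k f :\: Dverts k f m) (q f)) &
            p = q0 + \sum_(f : {set 'I_n.+1} | (2 <= #|f|)%N) q f])
   /\ (forall (q0 : {mpoly R[n]}) (q : {set 'I_n.+1} -> {mpoly R[n]}),
        inPk lam (Dverts k setT m) q0 ->
        (forall f : {set 'I_n.+1}, (2 <= #|f|)%N -> inPk lam (Tint k f :\: Dverts k f m) (q f)) ->
        q0 + \sum_(f : {set 'I_n.+1} | (2 <= #|f|)%N) q f = 0 ->
        q0 = 0 /\ forall f : {set 'I_n.+1}, (2 <= #|f|)%N -> q f = 0)).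
Proof.
move=> hk Hs Hev.
split.
  split; first exact: p1a.
  split; first by move=> i f _; apply: p1b.
  split; first by move=> f g _ _; apply: p1c.
  exact: p1d.
split.
  move=> p; split.
    move=> hp; have [c E] := span_all Hs Hev hp.
    exists (\sum_(a in Dverts k [set: 'I_n.+1] m) c a *: lampow lam a).
    exists (fun f => \sum_(a in piece m k f) c a *: lampow lam a).
    split.
    - by exists c.
    - by move=> f _; exists c.
    - by rewrite E (split_sum hk).
  case=> q0 [q [H0 Hq ->]].
  apply: leq_trans (msizeD_le _ _) _; rewrite geq_max; apply/andP; split.
    exact: inPk_msize Hs (Dverts_sub n m k) H0.
  apply: msize_sum_le => f Pf.
  exact: inPk_msize Hs (piece_sub m k f) (Hq f Pf).
move=> q0 q [c0 E0] Hq Hsum.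
have : forall f : {set 'I_n.+1}, exists c : {ffun mindex n k -> R},
    (2 <= #|f|)%N -> q f = \sum_(a in piece m k f) c a *: lampow lam a.
  move=> f; case: (boolP (2 <= #|f|)%N) => Pf; last by exists [ffun => 0].
  have [c Ec] := Hq f Pf; exists [ffun a => c a] => _.
  by rewrite Ec; apply: eq_bigr => a _; rewrite ffunE.
case/fin_all_exists => cf Hcf.
pose C a := if a \in Dverts k [set: 'I_n.+1] m then c0 a
            else cf [set i | (0 < (a i : nat))%N] a.
have HC : \sum_(a in latt n k) C a *: lampow lam a = 0.
  rewrite (split_sum hk) -[RHS]Hsum; congr (_ + _).
    by rewrite E0; apply: eq_bigr => a aD; rewrite /C aD.
  apply: eq_bigr => f Pf; rewrite (Hcf f Pf); apply: eq_bigr => a Ha.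
  by rewrite /C (negbTE (piece_notD hk Ha)) (piece_supp Ha).
have Z := indep Hs Hev HC.
split.
  rewrite E0 big1 // => a aD.
  have := Z a (subsetP (Dverts_sub n m k) a aD); rewrite /C aD => ->.
  by rewrite scale0r.
move=> f Pf; rewrite (Hcf f Pf) big1 // => a Ha.
have := Z a (subsetP (piece_sub m k f) a Ha).
by rewrite /C (negbTE (piece_notD hk Ha)) (piece_supp Ha) => ->; rewrite scale0r.
Qed.
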